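(* For every integer $p\ge 2$, the loop $C_p$ is isotopically transitive, i.e., its graph $M=\{(u,v,w)\in Q_{2p}^3 : w=u\ast v\}$ is acted on transitively by its autotopy group.
   Context: Let $Q_{2p}=\{x_\zeta : x\in\mathbb{Z}_p,\ \zeta\in\{0,1\}\}$. The loop $C_p$ is the operation on $Q_{2p}$ given by $x_\zeta\ast y_\xi=((-1)^\xi x+y+\zeta\xi)_{\zeta\oplus\xi}$, where the subscript arithmetic is modulo $2$ ($\oplus$) and the other arithmetic is modulo $p$. An isotopism of $Q_{2p}^3$ is a map $(u,v,w)\mapsto(\tau_1u,\tau_2v,\tau_3w)$ with $\tau_i$ permutations of $Q_{2p}$; the autotopy group of $M$ is the group of isotopisms mapping $M$ onto $M$. *)

(* Defs.v *)
From HB Require Import structures.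
From mathcomp Require Import all_boot all_order all_algebra all_fingroup.
Set Implicit Arguments. Unset Strict Implicit. Unset Printing Implicit Defensive.
Import GRing.Theory.
Local Open Scope ring_scope.

(* Q_{2p} = Z_p x Z_2; the pair (x, z) stands for x_z, with z : bool (true = 1). *)
Definition Q2 (p : nat) := ('Z_p * bool)%type.

Definition sgn (p : nat) (xi : bool) : 'Z_p := if xi then -1 else 1.

(* The loop C_p: x_z * y_xi = ((-1)^xi x + y + z*xi)_{z xor xi} *)
Definition Cp_op (p : nat) (a b : Q2 p) : Q2 p :=
  (sgn p b.2 * a.1 + b.1 + (a.2 && b.2)%:R, addb a.2 b.2).

Definition Cp_graph (p : nat) (t : Q2 p * Q2 p * Q2 p) : Prop :=
  t.2 = Cp_op t.1.1 t.1.2.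

Definition isotopism (p : nat) (t1 t2 t3 : {perm Q2 p})
  (t : Q2 p * Q2 p * Q2 p) : Q2 p * Q2 p * Q2 p :=
  (t1 t.1.1, t2 t.1.2, t3 t.2).

Definition is_autotopy (p : nat) (t1 t2 t3 : {perm Q2 p}) : Prop :=
  (forall t, Cp_graph t -> Cp_graph (isotopism t1 t2 t3 t)) /\
  (forall s, Cp_graph s -> exists t, Cp_graph t /\ isotopism t1 t2 t3 t = s).

(* Main.v *)
Require Import Defs.
From mathcomp Require Import all_boot all_order all_algebra all_fingroup.
From mathcomp Require Import ring.
Set Implicit Arguments. Unset Strict Implicit. Unset Printing Implicit Defensive.
Import GRing.Theory.
Local Open Scope ring_scope.

Section S.
Variable p : nat.
Local Notation Q := (Q2 p).

Definition strong (t1 t2 t3 : {perm Q}) :=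
  forall t, Cp_graph (isotopism t1 t2 t3 t) <-> Cp_graph t.

Definition hom (t1 t2 t3 : Q -> Q) :=
  forall a b, t3 (Cp_op a b) = Cp_op (t1 a) (t2 b).

Lemma hom_strong (t1 t2 t3 : {perm Q}) : hom t1 t2 t3 -> strong t1 t2 t3.
Proof.
move=> H [[a b] w]; rewrite /Cp_graph /isotopism /= -H; split.
- by move/perm_inj.
- by move->.
Qed.

Lemma iso_comp (s1 s2 s3 t1 t2 t3 : {perm Q}) t :
  isotopism (s1 * t1)%g (s2 * t2)%g (s3 * t3)%g t =
  isotopism t1 t2 t3 (isotopism s1 s2 s3 t).
Proof. by case: t => [[a b] w]; rewrite /isotopism /= !permM. Qed.

Lemma iso_K (t1 t2 t3 : {perm Q}) t :
  isotopism t1^-1%g t2^-1%g t3^-1%g (isotopism t1 t2 t3 t) = t.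
Proof. by case: t => [[a b] w]; rewrite /isotopism /= !permK. Qed.

Lemma iso_KV (t1 t2 t3 : {perm Q}) t :
  isotopism t1 t2 t3 (isotopism t1^-1%g t2^-1%g t3^-1%g t) = t.
Proof. by case: t => [[a b] w]; rewrite /isotopism /= !permKV. Qed.

Lemma strong_comp (s1 s2 s3 t1 t2 t3 : {perm Q}) :
  strong s1 s2 s3 -> strong t1 t2 t3 -> strong (s1 * t1)%g (s2 * t2)%g (s3 * t3)%g.
Proof. by move=> Hs Ht t; rewrite iso_comp Ht Hs. Qed.

Lemma strong_inv (t1 t2 t3 : {perm Q}) :
  strong t1 t2 t3 -> strong t1^-1%g t2^-1%g t3^-1%g.
Proof. by move=> H t; rewrite -[in X in _ <-> X](iso_KV t1 t2 t3 t) H. Qed.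

Lemma strong_auto (t1 t2 t3 : {perm Q}) : strong t1 t2 t3 -> is_autotopy t1 t2 t3.
Proof.
move=> H; split; first by move=> t /H.
move=> s Hs; exists (isotopism t1^-1%g t2^-1%g t3^-1%g s); split; last exact: iso_KV.
by apply/H; rewrite iso_KV.
Qed.

Lemma strong1 : strong 1%g 1%g 1%g.
Proof. by move=> [[a b] w]; rewrite /isotopism /= !perm1. Qed.

Definition mkp (f g : Q -> Q) (K : cancel f g) : {perm Q} := perm (can_inj K).

Definition shift (c : 'Z_p) (a : Q) : Q := (a.1 + c, a.2).
Lemma shiftK c : cancel (shift c) (shift (- c)).
Proof. by case=> x z; rewrite /shift /= addrK. Qed.

Definition bsh (c : 'Z_p) (a : Q) : Q := (a.1 + c - sgn p a.2 * c, a.2).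
Lemma bshK c : cancel (bsh c) (bsh (- c)).
Proof. by case=> x z; rewrite /bsh /=; congr pair; ring. Qed.

Definition neg1 (a : Q) : Q := (- a.1, a.2).
Lemma neg1K : cancel neg1 neg1.
Proof. by case=> x z; rewrite /neg1 /= opprK. Qed.

Definition f2 (a : Q) : Q := (a.1 + (a.2 : nat)%:R, ~~ a.2).
Definition g2 (a : Q) : Q := (a.1 - (~~ a.2 : nat)%:R, ~~ a.2).
Lemma f2K : cancel f2 g2.
Proof. by case=> x z; rewrite /f2 /g2 /= negbK addrK. Qed.

Definition h1 (a : Q) : Q := (- a.1, ~~ a.2).
Lemma h1K : cancel h1 h1.
Proof. by case=> x z; rewrite /h1 /= opprK negbK. Qed.

Definition h2 (a : Q) : Q := (- a.1 - (a.2 : nat)%:R, a.2).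
Lemma h2K : cancel h2 h2.
Proof. by case=> x z; rewrite /h2 /=; congr pair; ring. Qed.

Definition e : Q := (0, false).

Definition key (a b : Q) := exists t1 t2 t3 : {perm Q},
  strong t1 t2 t3 /\ t1 a = e /\ t2 b = e.

Lemma step (s1 s2 s3 : {perm Q}) a b :
  strong s1 s2 s3 -> key (s1 a) (s2 b) -> key a b.
Proof.
move=> Hs [t1 [t2 [t3 [Ht [H1 H2]]]]].
exists (s1 * t1)%g, (s2 * t2)%g, (s3 * t3)%g; split; first exact: strong_comp.
by rewrite !permM.
Qed.

Lemma strongA c : strong 1%g (mkp (shiftK c)) (mkp (shiftK c)).
Proof.
apply: hom_strong => [[x z] [y w]]; rewrite !permE /shift /Cp_op /=.
by congr pair; ring.
Qed.

Lemma strongB c : strong (mkp (shiftK c)) (mkp (bshK c)) (mkp (shiftK c)).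
Proof.
apply: hom_strong => [[x z] [y w]]; rewrite !permE /shift /bsh /Cp_op /=.
by congr pair; ring.
Qed.

Lemma strongF1 : strong (mkp h1K) (mkp h2K) (mkp h1K).
Proof.
apply: hom_strong => [[x z] [y w]]; rewrite !permE /h1 /h2 /Cp_op /sgn /=.
by case: z; case: w => /=; congr pair; ring.
Qed.

Lemma strongF2 : strong (mkp neg1K) (mkp f2K) (mkp f2K).
Proof.
apply: hom_strong => [[x z] [y w]]; rewrite !permE /neg1 /f2 /Cp_op /sgn /=.
by case: z; case: w => /=; congr pair; ring.
Qed.

Lemma keyff : key e e.
Proof. by exists 1%g, 1%g, 1%g; rewrite !perm1; split=> //; exact: strong1. Qed.

Lemma key_sv z w y : key (0, z) (0, w) -> key (0, z) (y, w).
Proof.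
move=> H; apply: (step (strongA (- y))).
by rewrite perm1 permE /shift /= addrN.
Qed.

Lemma key_ft : key (0, false) (0, true).
Proof.
apply: (step strongF2); rewrite !permE /neg1 /f2 /= oppr0.
exact: key_sv keyff.
Qed.

Lemma key_tf : key (0, true) (0, false).
Proof.
apply: (step strongF1); rewrite !permE /h1 /h2 /= oppr0.
exact: key_sv keyff.
Qed.

Lemma key_tt : key (0, true) (0, true).
Proof.
apply: (step strongF1); rewrite !permE /h1 /h2 /= oppr0.
exact: key_sv key_ft.
Qed.

Lemma key_all a b : key a b.
Proof.
case: a b => x z [y w].
apply: (step (strongB (- x))); rewrite !permE /shift /bsh /= addrN.
apply: key_sv; case: z; case: w.
- exact: key_tt.
- exact: key_tf.
- exact: key_ft.
- exact: keyff.
Qed.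

Lemma key_iso s : Cp_graph s -> exists t1 t2 t3 : {perm Q},
  strong t1 t2 t3 /\ isotopism t1 t2 t3 s = (e, e, e).
Proof.
case: s => [[a b] w] Hs.
have [t1 [t2 [t3 [H [H1 H2]]]]] := key_all a b.
exists t1, t2, t3; split=> //.
have := proj2 (H ((a, b), w)) Hs.
rewrite /Cp_graph /isotopism /= H1 H2 => ->.
by rewrite /Cp_op /e /sgn /= mul1r !addr0.
Qed.

End S.

Theorem proposition6 (p : nat) (hp : (1 < p)%N) :
  forall s t : Q2 p * Q2 p * Q2 p, Cp_graph s -> Cp_graph t ->
  exists t1 t2 t3 : {perm Q2 p},
    is_autotopy t1 t2 t3 /\ isotopism t1 t2 t3 s = t.
Proof.
move=> s t Hs Ht.
have [s1 [s2 [s3 [Hs' Es]]]] := key_iso Hs.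
have [t1 [t2 [t3 [Ht' Et]]]] := key_iso Ht.
exists (s1 * t1^-1)%g, (s2 * t2^-1)%g, (s3 * t3^-1)%g; split.
  by apply: strong_auto; apply: strong_comp => //; exact: strong_inv.
by rewrite iso_comp Es -Et iso_K.
Qed.
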